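(* For any digraph $D$ with no isolated vertex and any positive integers $k<k'$, $$\gamma_{trk'}(D)\le\gamma_{trk}(D)+(k'-k)\left\lfloor\frac{\gamma_{trk}(D)}{k}\right\rfloor,$$ and this bound is sharp.
   Context: All digraphs are finite, with no loops or multiple arcs (pairs of opposite arcs are allowed). $N^-(v)$ denotes the set of in-neighbors of $v$. A vertex is isolated if it has no in-neighbor and no out-neighbor. For a positive integer $k$, a $k$-rainbow dominating function ($k$RDF) on $D$ is a function $f:V(D)\to\mathcal P(\{1,\dots,k\})$ such that every $v$ with $f(v)=\emptyset$ satisfies $\bigcup_{u\in N^-(v)}f(u)=\{1,\dots,k\}$; its weight is $\omega(f)=\sum_v|f(v)|$. If $D$ has no isolated vertex, a total $k$RDF (T$k$RDF) is a $k$RDF $f$ such that the subdigraph induced by $\{v:f(v)\ne\emptyset\}$ has no isolated vertex; $\gamma_{trk}(D)$ is the minimum weight of a T$k$RDF. *)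

(* Defs.v *)
From mathcomp Require Import all_boot.
Set Implicit Arguments. Unset Strict Implicit. Unset Printing Implicit Defensive.

(* A digraph on a finite vertex type V is an arc relation e : rel V
   (e u v means there is an arc u -> v); no loops. Pairs of opposite arcs
   are allowed; multiple arcs cannot occur. *)
Definition digraph (V : finType) (e : rel V) : Prop := forall x, ~~ e x x.

Definition isolated (V : finType) (e : rel V) (v : V) : bool :=
  [forall u, ~~ e u v && ~~ e v u].

Definition no_isolated (V : finType) (e : rel V) : Prop :=
  forall v, ~~ isolated e v.

(* Colours {1,...,k} are represented by 'I_k. *)
Definition kRDF (V : finType) (e : rel V) (k : nat)
  (f : {ffun V -> {set 'I_k}}) : bool :=
  [forall v, (f v == set0) ==> (\bigcup_(u | e u v) f u == [set: 'I_k])].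

Definition TkRDF (V : finType) (e : rel V) (k : nat)
  (f : {ffun V -> {set 'I_k}}) : bool :=
  kRDF e f &&
  [forall v, (f v != set0) ==>
     [exists u, (f u != set0) && (e u v || e v u)]].

Definition weight (V : finType) (k : nat) (f : {ffun V -> {set 'I_k}}) : nat :=
  \sum_(v : V) #|f v|.

(* The default value #|V| * k is the
   weight of the constant function [set: 'I_k], which is a TkRDF whenever D has
   no isolated vertex, so it never changes the minimum in that case. *)
Definition gamma_tr (V : finType) (e : rel V) (k : nat) : nat :=
  \big[minn/(#|V| * k)%N]_(f : {ffun V -> {set 'I_k}} | TkRDF e f) weight f.

(* Main.v *)
Require Import Defs.
From mathcomp Require Import all_boot zify.
Set Implicit Arguments. Unset Strict Implicit. Unset Printing Implicit Defensive.


Lemma full_TkRDF (V : finType) (e : rel V) k :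
  no_isolated e -> 0 < k -> TkRDF e [ffun _ : V => [set: 'I_k]].
Proof.
move=> hno hk; apply/andP; split.
  apply/forallP=> v; rewrite ffunE; apply/implyP => /eqP h.
  have: (Ordinal hk) \in [set: 'I_k] by rewrite inE.
  by rewrite h inE.
apply/forallP=> v; apply/implyP=> _.
have := hno v; rewrite /isolated negb_forall => /existsP [u].
rewrite negb_and !negbK => hu.
apply/existsP; exists u; rewrite ffunE hu andbT.
by apply/set0Pn; exists (Ordinal hk); rewrite inE.
Qed.

Lemma weight_full (V : finType) k :
  weight [ffun _ : V => [set: 'I_k]] = #|V| * k.
Proof.
rewrite /weight; under eq_bigr do rewrite ffunE cardsT card_ord.
by rewrite sum_nat_const.
Qed.

Lemma gamma_attained (V : finType) (e : rel V) k :
  no_isolated e -> 0 < k -> exists f : {ffun V -> {set 'I_k}}, TkRDF e f /\ weight f = gamma_tr e k.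
Proof.
move=> hno hk; rewrite /gamma_tr.
apply: (big_ind (fun m => exists f, TkRDF e f /\ weight f = m)).
- by exists [ffun _ : V => [set: 'I_k]]; rewrite full_TkRDF // weight_full.
- move=> x y [f [hf <-]] [g [hg <-]]; case: (leqP (weight f) (weight g)) => h.
    by exists f; split=> //; apply/esym/minn_idPl.
  by exists g; split=> //; apply/esym/minn_idPr/ltnW.
- by move=> f hf; exists f.
Qed.

Lemma bigmin_le_seq (T : eqType) (r : seq T) (P : pred T) (F : T -> nat) x0 g :
  g \in r -> P g -> \big[minn/x0]_(i <- r | P i) F i <= F g.
Proof.
elim: r => [//|x r IH]; rewrite inE big_cons => /orP [/eqP <-|hr] hP.
  by rewrite hP geq_minl.
case: (P x); last exact: IH.
exact: leq_trans (geq_minr _ _) (IH hr hP).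
Qed.

Lemma gamma_le (V : finType) (e : rel V) k (g : {ffun V -> {set 'I_k}}) : TkRDF e g -> gamma_tr e k <= weight g.
Proof. move=> hg; apply: bigmin_le_seq => //; exact: mem_index_enum. Qed.

Definition dstar (m : nat) : rel (bool * 'I_m.+1) :=
  fun x y => ((x.1 == y.1) && ((x.2 == ord0) != (y.2 == ord0)))
          || [&& x.1 != y.1, x.2 == ord0 & y.2 == ord0].
Arguments dstar m : clear implicits.

Lemma dstar_digraph m : digraph (dstar m).
Proof. by move=> [s j]; rewrite /dstar /= !eqxx. Qed.

Lemma dstar_noiso m : no_isolated (dstar m).
Proof.
move=> [s j]; apply/negP => /forallP.
case: (boolP (j == ord0)) => hj.
  move=> /(_ (~~ s, ord0)) /andP [h _]; move: h.
  by rewrite /dstar /= hj; case: s.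
move=> /(_ (s, ord0)) /andP [h _]; move: h.
by rewrite /dstar /= eqxx (negbTE hj).
Qed.

Lemma weight_split m k (f : {ffun bool * 'I_m.+1 -> {set 'I_k}}) :
  weight f = \sum_(s : bool) (#|f (s, ord0)| + \sum_(i < m) #|f (s, lift ord0 i)|).
Proof.
rewrite /weight.
transitivity (\sum_(s : bool) \sum_(j : 'I_m.+1) #|f (s, j)|).
  by rewrite pair_big /=; apply: eq_bigr => -[s j].
apply: eq_bigr => s _; by rewrite big_ord_recl.
Qed.

Lemma dstar_gamma m k : 0 < k -> k <= m -> gamma_tr (dstar m) k = k * 2.
Proof.
move=> hk hkm; apply/eqP; rewrite eqn_leq; apply/andP; split.
  pose g := [ffun v : bool * 'I_m.+1 => if v.2 == ord0 then [set: 'I_k] else set0].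
  have z : forall s (i : 'I_m), #|g (s, lift ord0 i)| = 0.
    by move=> s i; rewrite ffunE /= cards0.
  have ->: k * 2 = weight g.
    rewrite weight_split big_bool !big1 => [|i _|i _]; rewrite ?z //.
    by rewrite !ffunE /= cardsT card_ord; lia.
  apply: gamma_le; apply/andP; split.
    apply/forallP=> -[s j]; apply/implyP; rewrite ffunE /=.
    case: (boolP (j == ord0)) => hj.
      move=> /eqP h; have: Ordinal hk \in [set: 'I_k] by rewrite inE.
      by rewrite h inE.
    move=> _; apply/eqP/setP=> x; rewrite inE; apply/bigcupP; exists (s, ord0).
      by rewrite /dstar /= eqxx (negbTE hj).
    by rewrite ffunE /= inE.
  apply/forallP=> -[s j]; apply/implyP; rewrite ffunE /=.
  case: (boolP (j == ord0)) => hj; last by rewrite eqxx.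
  move=> _; apply/existsP; exists (~~ s, ord0); rewrite ffunE /=.
  apply/andP; split.
    by apply/set0Pn; exists (Ordinal hk); rewrite inE.
  by rewrite /dstar /= hj; case: s.
have [f [hf <-]] := gamma_attained (@dstar_noiso m) hk.
rewrite weight_split big_bool.
suff side : forall s, k <= #|f (s, ord0)| + \sum_(i < m) #|f (s, lift ord0 i)|.
  by rewrite muln2 -addnn; apply: leq_add.
move=> s; case: (boolP (f (s, ord0) == setT)) => h.
  by rewrite (eqP h) cardsT card_ord leq_addr.
apply: leq_trans hkm _; apply: leq_trans (leq_addl _ _).
rewrite -[m in m <= _]card_ord -sum1_card; apply: leq_sum => i _.
rewrite card_gt0; apply/negP => h0.
case/andP: hf => /forallP hr _.
have hu := implyP (hr (s, lift ord0 i)) h0.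
apply: (negP h); apply/eqP/setP=> x; rewrite inE.
have : x \in \bigcup_(u | dstar m u (s, lift ord0 i)) f u by rewrite (eqP hu) inE.
case/bigcupP=> -[a b] heu hx; move: heu; rewrite /dstar /=.
have -> : (lift ord0 i == ord0) = false by rewrite eq_sym; apply/negbTE/neq_lift.
rewrite !andbF orbF => /andP [/eqP ea hb].
have eb : b = ord0 by apply/eqP; move: hb; case: (b == ord0).
by move: hx; rewrite ea eb.
Qed.

Lemma extend (V : finType) (e : rel V) k k' (f : {ffun V -> {set 'I_k}}) :
  0 < k -> k < k' -> TkRDF e f ->
  exists g : {ffun V -> {set 'I_k'}}, TkRDF e g /\
    weight g <= weight f + (k' - k) * (weight f %/ k).
Proof.
move=> hk hkk' /andP [/forallP hf /forallP ht].
have hkk : k <= k' by apply: ltnW.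
pose c (i : 'I_k) := \sum_(v : V) (i \in f v : nat).
have csum : \sum_(i : 'I_k) c i = weight f.
  rewrite /c /weight.
  transitivity (\sum_(v : V) \sum_(i : 'I_k) (i \in f v : nat)); first exact: exchange_big.
  apply: eq_bigr => v _.
  rewrite -sum1_card [RHS]big_mkcond /=; apply: eq_bigr => i _.
  by case: (i \in f v).
pose i0 := [arg min_(i < Ordinal hk) c i].
have hi0 : forall j, c i0 <= c j.
  by rewrite /i0; case: arg_minnP => // i _ H j; apply: H.
have ci0 : c i0 <= weight f %/ k.
  rewrite leq_divRL // -csum.
  have -> : c i0 * k = \sum_(i : 'I_k) c i0 by rewrite sum_nat_const card_ord mulnC.
  by apply: leq_sum => j _; apply: hi0.
pose S := [set j : 'I_k' | k <= j].
have cardS : #|S| <= k' - k.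
  have := cardsC S; rewrite card_ord => hC.
  suff : k <= #|~: S| by move=> h; move: hC; lia.
  have winj : injective (widen_ord hkk).
    by move=> a b /(congr1 val) /= /val_inj.
  rewrite -{1}(card_ord k) -(card_imset (mem 'I_k) winj).
  apply: subset_leq_card; apply/subsetP => x /imsetP [a _ ->].
  by rewrite !inE -ltnNge /=; apply: ltn_ord.
pose g := [ffun v => (widen_ord hkk @: f v) :|: (if i0 \in f v then S else set0)].
have gE : forall v, (g v == set0) = (f v == set0).
  move=> v; rewrite ffunE; case: (set_0Vmem (f v)) => [->|[x hx]].
    by rewrite imset0 in_set0 set0U !eqxx.
  have -> : (f v == set0) = false by apply/negbTE/set0Pn; exists x.
  apply/negbTE/set0Pn; exists (widen_ord hkk x); rewrite in_setU.
  by apply/orP; left; apply: imset_f.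
exists g; split.
  apply/andP; split.
    apply/forallP=> v; apply/implyP; rewrite gE => hv.
    have hu := implyP (hf v) hv.
    apply/eqP/setP=> j; rewrite inE; apply/bigcupP.
    case: (ltnP j k) => hj.
      have : Ordinal hj \in \bigcup_(u | e u v) f u by rewrite (eqP hu) inE.
      case/bigcupP=> u heu hx; exists u => //; rewrite ffunE in_setU.
      apply/orP; left; apply/imsetP; exists (Ordinal hj) => //; exact: val_inj.
    have : i0 \in \bigcup_(u | e u v) f u by rewrite (eqP hu) inE.
    case/bigcupP=> u heu hx; exists u => //; rewrite ffunE in_setU hx.
    by apply/orP; right; rewrite inE.
  apply/forallP=> v; apply/implyP; rewrite gE => hv.
  case/existsP: (implyP (ht v) hv) => u /andP [hu heu].
  by apply/existsP; exists u; rewrite gE hu.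
apply: (@leq_trans (\sum_v (#|f v| + (i0 \in f v) * (k' - k)))).
  apply: leq_sum => v _; rewrite ffunE.
  apply: leq_trans (leq_card_setU _ _).1 _.
  apply: leq_add; first exact: leq_imset_card.
  by case: (i0 \in f v); rewrite ?cards0 // mul1n.
rewrite big_split /= -big_distrl /= -/(weight f) -/(c i0).
rewrite leq_add2l mulnC; apply: leq_mul => //.
Qed.

Theorem theorem3p7 :
  (forall (V : finType) (e : rel V) (k k' : nat),
      digraph e -> no_isolated e -> 0 < k -> k < k' ->
      gamma_tr e k' <= gamma_tr e k + (k' - k) * (gamma_tr e k %/ k))
  /\
  (forall k k' : nat, 0 < k -> k < k' ->
      exists (V : finType) (e : rel V),
        [/\ digraph e, no_isolated e &
            gamma_tr e k' = gamma_tr e k + (k' - k) * (gamma_tr e k %/ k)]).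
Proof.
split.
  move=> V e k k' _ hno hk hkk'.
  have [f [hf <-]] := gamma_attained hno hk.
  have [g [hg hw]] := extend hk hkk' hf.
  by apply: leq_trans hw; apply: gamma_le.
move=> k k' hk hkk'.
exists ((bool * 'I_k'.+1)%type : finType), (dstar k').
split; [exact: dstar_digraph | exact: dstar_noiso |].
rewrite !dstar_gamma // ?(ltnW hkk') //; last exact: leq_trans hk (ltnW hkk').
rewrite mulKn //; lia.
Qed.
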